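(* Let $q=3^m$ with $m\ge 1$ and let $f(x)=x^{q+2}$ on $\mathbb{F}_{q^2}$. Then $\beta_f=q+2$. Moreover, if $q\ge 9$, then $$\nu_{q+2}=\begin{cases}\frac{q-1}{2},& m \text{ even},\\ \frac{q+1}{2},& m\text{ odd},\end{cases}\qquad \nu_q=\begin{cases}\frac{q-1}{2},& m \text{ even},\\ \frac{q-3}{2},& m\text{ odd}.\end{cases}$$
   Context: For $f:\mathbb{F}_{q^2}\to\mathbb{F}_{q^2}$ and $a,b\in\mathbb{F}_{q^2}$, $\beta_f(a,b)$ is the number of $(x,y)\in\mathbb{F}_{q^2}^2$ with $f(x)-f(y)=b$ and $f(x+a)-f(y+a)=b$; $\beta_f=\max_{a,b\in\mathbb{F}_{q^2}^*}\beta_f(a,b)$. For the power function $f$, the boomerang spectrum is taken with $a=1$: $\nu_i=\#\{b\in\mathbb{F}_{q^2}^*:\ \beta_f(1,b)=i\}$. *)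

(* Defs.v *)
From HB Require Import structures.
From mathcomp Require Import all_boot all_order all_algebra.
Set Implicit Arguments. Unset Strict Implicit. Unset Printing Implicit Defensive.
Import GRing.Theory.
Local Open Scope ring_scope.

Definition boomerang_entry (F : finFieldType) (f : F -> F) (a b : F) : nat :=
  #|[set xy : F * F | (f xy.1 - f xy.2 == b) && (f (xy.1 + a) - f (xy.2 + a) == b)]|.

Definition boomerang_uniformity (F : finFieldType) (f : F -> F) : nat :=
  (\max_(ab : F * F | (ab.1 != 0%R) && (ab.2 != 0%R)) boomerang_entry f ab.1 ab.2)%N.

Definition boomerang_spectrum_count (F : finFieldType) (f : F -> F) (i : nat) : nat :=
  #|[set b : F | (b != 0) && (boomerang_entry f 1 b == i)]|.

(* Main.v *)
Require Import Defs.
From HB Require Import structures.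
From mathcomp Require Import all_boot all_order all_algebra all_field.
From mathcomp Require Import ring zify.
Set Implicit Arguments. Unset Strict Implicit. Unset Printing Implicit Defensive.
Import GRing.Theory.
Local Open Scope ring_scope.

Section Main.
Variable F : finFieldType.
Variable m : nat.
Hypothesis hm : (1 <= m)%N.
Hypothesis hcard : #|F| = ((3 ^ m) ^ 2)%N.
Local Notation q := (3 ^ m)%N.

Lemma char3 : 3 \in [pchar F].
Proof. apply: (@card_finPcharP F 3 (m * 2)); by rewrite // hcard expnM. Qed.

Lemma three0 : (3 : F) = 0.
Proof. by have := pcharf0 char3. Qed.

Lemma two_m1 : (2 : F) = -1.
Proof. apply/eqP; rewrite -subr_eq0 opprK -three0; apply/eqP; ring. Qed.

Lemma two_neq0 : (2 : F) != 0.
Proof. by rewrite two_m1 oppr_eq0 oner_eq0. Qed.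

Lemma q_ge3 : (3 <= q)%N.
Proof. by rewrite -{1}(expn1 3) leq_exp2l. Qed.

Lemma q_odd : odd q.
Proof. by rewrite oddX orbT. Qed.

Lemma barD (x y : F) : (x + y) ^+ q = x ^+ q + y ^+ q.
Proof.
apply: exprDn_pchar; rewrite pnatX ?orbT //.
by rewrite pnatE // char3.
Qed.

Lemma barN (x : F) : (- x) ^+ q = - x ^+ q.
Proof. by rewrite exprNn -signr_odd q_odd expr1 mulN1r. Qed.

Lemma barB (x y : F) : (x - y) ^+ q = x ^+ q - y ^+ q.
Proof. by rewrite barD barN. Qed.

Lemma barK (x : F) : (x ^+ q) ^+ q = x.
Proof. by rewrite -exprM mulnn -hcard expf_card. Qed.

Lemma barM (x y : F) : (x * y) ^+ q = x ^+ q * y ^+ q.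
Proof. exact: exprMn. Qed.

Definition inK (x : F) := x ^+ q == x.

Lemma inK1 : inK 1.
Proof. by rewrite /inK expr1n. Qed.
Lemma inKD x y : inK x -> inK y -> inK (x + y).
Proof. by rewrite /inK barD => /eqP-> /eqP->. Qed.
Lemma inKN x : inK x -> inK (- x).
Proof. by rewrite /inK barN => /eqP->. Qed.
Lemma inKM x y : inK x -> inK y -> inK (x * y).
Proof. by rewrite /inK barM => /eqP-> /eqP->. Qed.
Lemma inKbar x : inK x -> x ^+ q = x.
Proof. by move/eqP. Qed.
Lemma inK_norm x : inK (x * x ^+ q).
Proof. by rewrite /inK barM barK mulrC. Qed.
Lemma inK_tr x : inK (x + x ^+ q).
Proof. by rewrite /inK barD barK addrC. Qed.

Lemma card_roots (p : {poly F}) : p != 0 -> (#|[set x | root p x]| < size p)%N.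
Proof.
move=> p0; rewrite cardE; apply: max_poly_roots => //; last exact: enum_uniq.
by apply/allP => x; rewrite mem_enum inE.
Qed.

Lemma card_Xn (n : nat) (c : F) : (0 < n)%N -> (#|[set x : F | x ^+ n == c]| <= n)%N.
Proof.
move=> n0; have := @card_roots ('X^n - c%:P).
rewrite size_XnsubC // ltnS.
have -> : [set x | x ^+ n == c] = [set x | root ('X^n - c%:P) x].
  by apply/setP => x; rewrite !inE rootE !hornerE subr_eq0.
by apply; rewrite -size_poly_eq0 size_XnsubC.
Qed.

Lemma card_fibers (T1 T2 : finType) (phi : T1 -> T2) (A : {set T1}) :
  #|A| = (\sum_(c in phi @: A) #|[set x in A | phi x == c]|)%N.
Proof.
rewrite -sum1_card (partition_big_imset phi); apply: eq_bigr => c _.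
by rewrite sum1dep_card.
Qed.

Lemma fiber_bound (T1 T2 : finType) (phi : T1 -> T2) (A : {set T1}) (C : {set T2}) (k : nat) :
  {in A, forall x, phi x \in C} ->
  {in C, forall c, #|[set x in A | phi x == c]| <= k}%N -> (#|A| <= k * #|C|)%N.
Proof.
move=> hA hC; rewrite (card_fibers phi).
apply: (@leq_trans (\sum_(c in phi @: A) k)%N).
  by apply: leq_sum => c /imsetP [x xA ->]; apply: hC; apply: hA.
rewrite sum_nat_const mulnC leq_mul2l; apply/orP; right.
by apply: subset_leq_card; apply/subsetP => c /imsetP [x xA ->]; apply: hA.
Qed.

Definition Kx := [set x : F | inK x & x != 0].
Definition U := [set t : F | t ^+ q.+1 == -1].

Lemma card_Kx_le : (#|Kx| <= q.-1)%N.
Proof.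
apply: (@leq_trans #|[set x : F | x ^+ q.-1 == 1]|); last first.
  by apply: card_Xn; have := q_ge3; case: (q) => //= [[|[|n]]].
apply: subset_leq_card; apply/subsetP => x; rewrite !inE => /andP [/eqP xK x0].
have qS : q = q.-1.+1 by have := q_ge3; case: (q).
have : x ^+ q.-1 * x = 1 * x by rewrite -exprSr -qS mul1r.
by move/(mulIf x0) ->.
Qed.

Lemma normK (x : F) : x != 0 -> x ^+ q.+1 \in Kx.
Proof.
move=> x0; rewrite inE expf_neq0 // andbT exprS; exact: inK_norm.
Qed.

Lemma card_Fx : #|[set x : F | x != 0]| = (q ^ 2).-1.
Proof.
rewrite -hcard -(cardsC1 (0 : F)); apply: eq_card => x; by rewrite !inE.
Qed.

Lemma card_Kx : #|Kx| = q.-1.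
Proof.
apply/eqP; rewrite eqn_leq card_Kx_le /=.
have h1 := @fiber_bound _ _ (fun x : F => x ^+ q.+1) [set x : F | x != 0] Kx q.+1.
have : ((q ^ 2).-1 <= q.+1 * #|Kx|)%N.
  rewrite -card_Fx; apply: h1.
    by move=> x; rewrite inE; apply: normK.
  move=> c _; apply: (@leq_trans #|[set x : F | x ^+ q.+1 == c]|); last exact: card_Xn.
  by apply: subset_leq_card; apply/subsetP => x; rewrite !inE => /andP [].
have -> : (q ^ 2).-1 = (q.+1 * q.-1)%N.
  have := q_ge3; case: (q) => // n _; rewrite -!subn1; lia.
by rewrite leq_mul2l.
Qed.

Lemma inKm1 : -1 \in Kx.
Proof. by rewrite inE oppr_eq0 oner_eq0 andbT; apply: inKN; apply: inK1. Qed.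

Lemma card_U : #|U| = q.+1.
Proof.
apply/eqP; rewrite eqn_leq card_Xn //=.
set A' := [set x : F | (x != 0) && (x ^+ q.+1 != -1)].
have hA : (#|A'| <= q.+1 * #|Kx :\ (-1 : F)%R|)%N.
  apply: (@fiber_bound _ _ (fun x : F => x ^+ q.+1)).
    move=> x; rewrite !inE => /andP [x0 xn]; rewrite xn /=.
    by have := normK x0; rewrite inE.
  move=> c _; apply: (@leq_trans #|[set x : F | x ^+ q.+1 == c]|); last exact: card_Xn.
  by apply: subset_leq_card; apply/subsetP => x; rewrite !inE => /andP [].
have hC : #|Kx :\ (-1 : F)%R| = q.-2.
  by have := cardsD1 (-1 : F) Kx; rewrite inKm1 card_Kx add1n; have := q_ge3; lia.
have hF := card_Fx.
have := cardsID U [set x : F | x != 0].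
have -> : [set x : F | x != 0] :&: U = U.
  apply/setP => x; rewrite !inE; case: eqP => //= ->.
  by rewrite expr0n /= eq_sym oppr_eq0 oner_eq0.
have -> : [set x : F | x != 0] :\: U = A'.
  by apply/setP => x; rewrite !inE andbC.
rewrite hF => hsum.
move: hA; rewrite hC => hA.
have q3 := q_ge3.
have e1 : ((q ^ 2).-1 = q * q - 1)%N by rewrite -subn1 expnS expn1.
rewrite e1 in hsum.
have e2 : (q.+1 * q.-2 = q * q - q - 2)%N.
  case: (q) q3 => // [[|[|n]]] // _; rewrite !mulSn !mulnS /=; lia.
rewrite e2 in hA.
have hq : (3 * q <= q * q)%N by rewrite leq_mul2r q3 orbT.
move: hsum hA hq q3; set Q := (q * q)%N; clearbody Q; move: (3 ^ m)%N => qq; clearbody A'; move: #|U| #|A'| => u a; lia.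
Qed.

Lemma card_K : #|[set x : F | inK x]| = q.
Proof.
have := cardsD1 0 [set x : F | inK x].
have -> : [set x : F | inK x] :\ 0 = Kx by apply/setP => x; rewrite !inE andbC.
rewrite card_Kx !inE /inK expr0n.
have := q_ge3; case: (q) => // n _ /=; rewrite eqxx add1n => ->; done.
Qed.

Lemma odd_half_pow3 (n : nat) : odd ((3 ^ n)%N.-1./2) = odd n.
Proof.
elim: n => [|n IH] //.
have o : odd (3 ^ n)%N by rewrite oddX orbT.
have p : (0 < 3 ^ n)%N by rewrite expn_gt0.
have o' : ((3 ^ n).-1 = ((3 ^ n).-1./2).*2)%N.
  have := odd_double_half (3 ^ n)%N.-1.
  have -> : odd (3 ^ n)%N.-1 = false by move: o; case: (3 ^ n)%N => [|k] //= /negPf.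
  by rewrite add0n.
have h : ((3 ^ n.+1).-1 = (3 * (3 ^ n).-1./2 + 1).*2)%N.
  rewrite expnS; move: o' p; move: (3 ^ n)%N ((3 ^ n).-1./2)%N => k a; lia.
rewrite h doubleK oddD oddM /= IH; by case: (odd n).
Qed.

Definition e := (q.-1./2)%N.

Lemma qm1 : q.-1 = (e * 2)%N.
Proof.
rewrite /e muln2 -[LHS](odd_double_half q.-1).
have -> : odd q.-1 = false by move: q_odd; case: (q) => [|k] //= /negPf.
by rewrite add0n.
Qed.

Lemma odd_e : odd e = odd m.
Proof. exact: odd_half_pow3. Qed.

Lemma Kx_pow (x : F) : x \in Kx -> x ^+ q.-1 = 1.
Proof.
rewrite inE => /andP [/eqP xK x0].
have qS : q = q.-1.+1 by have := q_ge3; case: (q).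
have : x ^+ q.-1 * x = 1 * x by rewrite -exprSr -qS mul1r.
by move/(mulIf x0) ->.
Qed.

Lemma m1_neq1 : (-1 : F) != 1.
Proof.
apply/eqP => h; move: two_neq0; rewrite -[(2:F)]/(1 *+ 2) mulr2n -{1}h addNr eqxx; done.
Qed.

Definition I := [set t : F | inK t & t ^+ 2 == -1].

Lemma I_odd : odd m -> I = set0.
Proof.
move=> om; apply/setP => t; rewrite !inE.
apply/negP => /andP [tK /eqP t2].
have t0 : t != 0 by apply: contra_eq_neq t2 => ->; rewrite expr0n /= eq_sym oppr_eq0 oner_eq0.
have := Kx_pow (_ : t \in Kx); rewrite inE tK t0 => /(_ isT).
rewrite qm1 mulnC exprM t2 -signr_odd odd_e om expr1 => /eqP; apply/negP; exact: m1_neq1.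
Qed.

Lemma I_even : ~~ odd m -> #|I| = 2.
Proof.
move=> em.
set S := [set x ^+ 2 | x in Kx].
set R := [set s : F | s ^+ e == 1].
have e0 : (0 < e)%N by have := qm1; have := q_ge3; case: (e) => //; case: (q) => // [[|[|]]].
have SR : S \subset R.
  apply/subsetP => s /imsetP [x xK ->]; rewrite inE -exprM mulnC -qm1.
  by rewrite Kx_pow.
have h1 : (#|Kx| <= 2 * #|S|)%N.
  apply: (@fiber_bound _ _ (fun x : F => x ^+ 2)).
    by move=> x xK; apply/imsetP; exists x.
  move=> c _; apply: (@leq_trans #|[set x : F | x ^+ 2 == c]|); last exact: card_Xn.
  by apply: subset_leq_card; apply/subsetP => x; rewrite !inE => /andP [].
have h2 : (#|R| <= e)%N by apply: card_Xn.
have h3 : #|S| = #|R|.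
  apply/eqP; rewrite eqn_leq subset_leq_card //=.
  by move: h1; rewrite card_Kx qm1 mulnC leq_mul2l /= => h; apply: leq_trans h2 h.
have SeqR : S = R by apply/eqP; rewrite eqEcard SR h3 leqnn.
have : (-1 : F) \in R by rewrite inE -signr_odd odd_e (negPf em) expr0.
rewrite -SeqR => /imsetP [r rK r2].
have rI : r \in I by move: rK; rewrite !inE -r2 eqxx => /andP [-> _].
have rI' : - r \in I.
  move: rK; rewrite !inE sqrrN -r2 eqxx => /andP [rK _]; rewrite andbT; exact: inKN.
have r0 : r != 0 by move: rK; rewrite inE => /andP [].
have rr : r != - r.
  apply/eqP => h; have : 2 * r = 0 by rewrite mulr_natl mulr2n {2}h subrr.
  by apply/eqP; rewrite mulf_eq0 (negPf two_neq0) (negPf r0).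
apply/eqP; rewrite eqn_leq; apply/andP; split.
  apply: (@leq_trans #|[set t : F | t ^+ 2 == -1]|); last exact: card_Xn.
  by apply: subset_leq_card; apply/subsetP => x; rewrite !inE => /andP [].
have <- : #|[set r; - r]| = 2 by rewrite cards2 rr.
apply: subset_leq_card; apply/subsetP => x; rewrite !inE => /orP [] /eqP ->; by [rewrite inE in rI | rewrite inE in rI'].
Qed.

Definition T := [set t : F | (t ^+ q.+1 == -1) && ~~ inK t].

Lemma card_T_I : (#|T| + #|I|)%N = q.+1.
Proof.
rewrite -card_U -(cardsID [set x : F | inK x] U) addnC.
congr (_ + _)%N; apply: eq_card => t; rewrite !inE.
  case tK: (inK t) => /=; last by rewrite andbF.
  by rewrite andbT [in RHS]exprS (inKbar tK) -expr2.
by rewrite andbC.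
Qed.

Lemma char3_eq (x y z : F) : x - y = 3 * z -> x = y.
Proof. by rewrite three0 mul0r => /eqP; rewrite subr_eq0 => /eqP. Qed.

Definition tr (t : F) := - (t + t ^+ q).

Lemma inK_bar t : inK (t ^+ q) = inK t.
Proof. by rewrite /inK barK eq_sym. Qed.

Lemma T_bar t : t \in T -> t ^+ q \in T.
Proof.
rewrite !inE inK_bar => /andP [/eqP h ->]; rewrite andbT.
by rewrite exprAC h barN expr1n.
Qed.

Lemma T_neq t : t \in T -> t != t ^+ q.
Proof. by rewrite inE => /andP [_]; rewrite /inK eq_sym. Qed.

Lemma T_norm t : t \in T -> t * t ^+ q = -1.
Proof. by rewrite inE -exprS => /andP [/eqP]. Qed.

Lemma T_fiber t : t \in T -> [set t' in T | tr t' == tr t] = [set t; t ^+ q].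
Proof.
move=> tT; apply/setP => u; rewrite in_set2 [in LHS]in_set.
apply/idP/idP.
  move=> /andP [uT /eqP htr].
  have nu := T_norm uT; have nt := T_norm tT.
  have : (u - t) * (u - t ^+ q) = 0.
    move: htr; rewrite /tr => /oppr_inj htr.
    have -> : (u - t) * (u - t ^+ q) = u * u - u * (t + t ^+ q) + t * t ^+ q by ring.
    rewrite -htr nt; move: nu; set ub := u ^+ q => nu; ring: nu.
  by move/eqP; rewrite mulf_eq0 !subr_eq0.
move=> /orP [] /eqP ->; first by rewrite tT eqxx.
by rewrite T_bar //= /tr barK addrC.
Qed.

Lemma card_T : #|T| = (2 * #|tr @: T|)%N.
Proof.
rewrite (card_fibers tr) mulnC -sum_nat_const; apply: eq_bigr => c /imsetP [t tT ->].
by rewrite T_fiber // cards2 T_neq.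
Qed.

Definition fq (x : F) := x ^+ (q + 2).
Definition h (t : F) := t - t ^+ q - t ^+ 2 * t ^+ q.
Definition G (b : F) := [set t : F | ~~ inK t & h t == b].

Lemma fE x : fq x = x ^+ q * x ^+ 2.
Proof. by rewrite /fq exprD. Qed.

Lemma fK x : inK x -> fq x = x ^+ 3.
Proof. by move=> /eqP xK; rewrite fE xK -exprS. Qed.

Lemma fD1 x : fq (x + 1) = fq x + ((x - 1) * (x - x ^+ q) + 1).
Proof.
rewrite !fE barD expr1n; set xb := x ^+ q.
apply: (@char3_eq _ _ (x * xb + x)); ring.
Qed.

Lemma hE t : fq (t + 1) - fq (- (t + 1) - 1) = h t.
Proof.
rewrite !fE /h !barD !barN !barD expr1n; set tb := t ^+ q.
apply: (@char3_eq _ _ (t ^+ 2 * tb + 2 * t * tb + 2 * tb + t ^+ 2 + 3 * t + 3)); ring.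
Qed.

Lemma barD1 (x : F) : (x - 1) ^+ q = x ^+ q - 1.
Proof. by rewrite barB expr1n. Qed.

Lemma Dcase (x y : F) : (x - 1) * (x - x ^+ q) = (y - 1) * (y - y ^+ q) ->
  [\/ inK x && inK y, x = y | y = - x - 1].
Proof.
move=> E1.
have E2 : (x ^+ q - 1) * (x - x ^+ q) = (y ^+ q - 1) * (y - y ^+ q).
  have := congr1 (fun z => z ^+ q) E1; rewrite !barM !barD1 !barB !barK.
  move=> E; apply: oppr_inj; rewrite -!mulrN !opprB; exact: E.
set u := x - x ^+ q in E1 E2; set v := y - y ^+ q in E1 E2.
have uv : (u - v) * (u + v) = 0.
  have : u * u = v * v.
    have -> : u * u = (x - 1) * u - (x ^+ q - 1) * u by rewrite /u; ring.
    by rewrite E1 E2 /v; ring.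
  move=> e; have -> : (u - v) * (u + v) = u * u - v * v by ring.
  by rewrite e subrr.
have Ku : (u == 0) = inK x by rewrite /u subr_eq0 /inK eq_sym.
have Kv : (v == 0) = inK y by rewrite /v subr_eq0 /inK eq_sym.
move/eqP: uv; rewrite mulf_eq0 => /orP [].
  rewrite subr_eq0 => /eqP uv.
  have : (x - y) * u = 0.
    have -> : (x - y) * u = (x - 1) * u - (y - 1) * u by ring.
    by rewrite {2}uv E1 subrr.
  move/eqP; rewrite mulf_eq0 subr_eq0 => /orP [/eqP -> | u0]; first by constructor 2.
  by constructor 1; rewrite -Ku -Kv -uv u0.
rewrite addr_eq0 => /eqP uv.
have : (x + y - 2) * u = 0.
  have -> : (x + y - 2) * u = (x - 1) * u + (y - 1) * u by ring.
  by rewrite E1 uv mulrN addrN.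
move/eqP; rewrite mulf_eq0 => /orP [| u0].
  rewrite two_m1 => /eqP e; constructor 3.
  by apply/eqP; rewrite -subr_eq0 -e; apply/eqP; ring.
have v0 : v == 0 by rewrite -oppr_eq0 -uv.
by constructor 1; rewrite -Ku -Kv u0 v0.
Qed.

Lemma cube_diff (x y : F) : (x - y) ^+ 3 = x ^+ 3 - y ^+ 3.
Proof. by apply: (@char3_eq _ _ (x * y * y - x * x * y)); ring. Qed.

Lemma cube_inj (x y : F) : x ^+ 3 = y ^+ 3 -> x = y.
Proof.
move=> e; apply/eqP; rewrite -subr_eq0.
have : (x - y) ^+ 3 == 0 by rewrite cube_diff e subrr.
by rewrite expf_eq0.
Qed.

Lemma inK_exp x n : inK x -> inK (x ^+ n).
Proof. by rewrite /inK => /eqP xK; rewrite exprAC xK. Qed.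

Lemma card_S1 (b : F) :
  #|[set xy : F * F | inK xy.1 && inK xy.2 && ((xy.1 - xy.2) ^+ 3 == b)]| =
  if inK b then q else 0%N.
Proof.
case bK: (inK b); last first.
  apply/eqP; rewrite cards_eq0; apply/eqP; apply/setP => [[x y]]; rewrite !inE /=.
  apply/negP => /andP [/andP [xK yK] /eqP e]; move: bK; rewrite -e.
  by rewrite (inK_exp 3 (inKD xK (inKN yK))).
set r := b ^+ (3 ^ m.-1)%N.
have r3 : r ^+ 3 = b.
  rewrite /r -exprM mulnC -expnS prednK //; exact/eqP.
rewrite -card_K -(@card_imset _ _ (fun x : F => (x, x - r))); last by move=> x1 x2 [].
apply: eq_card => -[x y]; rewrite !inE /=.
apply/idP/idP.
  move=> /andP [/andP [xK yK] /eqP e]; apply/imsetP; exists x; first by rewrite inE.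
  congr (_, _); rewrite -r3 in e; have := cube_inj e => <-; by rewrite opprB addrC subrK.
move=> /imsetP [x']; rewrite inE => xK [-> ->].
rewrite xK inKD ?inKN //=; last by rewrite /r; apply: inK_exp; rewrite bK.
by rewrite opprB addrC subrK r3.
Qed.

Lemma inK_sub1 x : inK (x - 1) = inK x.
Proof. by rewrite /inK barD1; apply/eqP/eqP => [e|->] //; apply: (addIr (-1)). Qed.

Lemma entry_char (b : F) : b != 0 ->
  boomerang_entry fq 1 b = ((if inK b then q else 0) + #|G b|)%N.
Proof.
move=> b0; rewrite /boomerang_entry.
set S1 := [set xy : F * F | inK xy.1 && inK xy.2 && ((xy.1 - xy.2) ^+ 3 == b)].
set S2 := (fun t => (t + 1, - (t + 1) - 1)) @: G b.
have SE : [set xy : F * F | (fq xy.1 - fq xy.2 == b) && (fq (xy.1 + 1) - fq (xy.2 + 1) == b)]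
          = S1 :|: S2.
  apply/setP => -[x y]; rewrite !inE /=.
  apply/idP/idP.
  - move=> /andP [/eqP e1 /eqP e2].
    have ED : (x - 1) * (x - x ^+ q) = (y - 1) * (y - y ^+ q).
      move: e2; rewrite !fD1 -e1 => e2.
      apply/eqP; rewrite -subr_eq0; apply/eqP.
      move: e2; set A := fq x; set B := fq y; set Dx := (x - 1) * _; set Dy := (y - 1) * _.
      move=> e2; transitivity (A + (Dx + 1) - (B + (Dy + 1)) - (A - B)); first by ring.
      by rewrite e2 subrr.
    case xK: (inK x).
      case: (Dcase ED) => [/andP [_ yK] | xy | yx].
      + by rewrite yK /= -e1 !fK // cube_diff eqxx.
      + by move: b0; rewrite -e1 xy subrr eqxx.
      + have yK : inK y by rewrite yx; apply: inKD; [exact: inKN | exact: inKN inK1].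
        by rewrite yK /= -e1 !fK // cube_diff eqxx.
    case: (Dcase ED) => [/andP []| xy | yx]; first by rewrite xK.
      by move: b0; rewrite -e1 xy subrr eqxx.
    apply/orP; right; apply/imsetP; exists (x - 1).
      by rewrite inE inK_sub1 xK /= -(hE (x - 1)) subrK -yx e1.
    by rewrite subrK yx.
  - move=> /orP [/andP [/andP [xK yK] /eqP e] | /imsetP [t]].
      have e1 : fq x - fq y = b by rewrite !fK // -cube_diff.
      rewrite e1 eqxx /= !fD1 (eqP xK) (eqP yK) !subrr !mulr0 !add0r.
      by rewrite -e1; apply/eqP; ring.
    rewrite inE => /andP [tK /eqP ht] [-> ->].
    have e1 : fq (t + 1) - fq (- (t + 1) - 1) = b by rewrite hE.
    rewrite e1 eqxx /= (fD1 (t + 1)) (fD1 (- (t + 1) - 1)).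
    rewrite -e1; apply/eqP.
    rewrite barD !barB !barN !barD expr1n; set tb := t ^+ q.
    set A := fq (t + 1); set B := fq _.
    apply: (@char3_eq _ _ (tb - t)); ring.
rewrite SE cardsU.
have -> : S1 :&: S2 = set0.
  apply/setP => -[x y]; rewrite !inE /=; apply/negP => /andP [/andP [/andP [xK _] _]].
  move=> /imsetP [t]; rewrite inE => /andP [tK _] [ex _].
  have et : t = x - 1 by rewrite ex addrK.
  by move: tK; rewrite et inK_sub1 xK.
rewrite cards0 subn0 card_S1 card_imset //.
by move=> t1 t2 [] /addIr.
Qed.

Lemma bar_exp2 (t : F) : (t ^+ 2) ^+ q = (t ^+ q) ^+ 2.
Proof. by rewrite exprAC. Qed.

Lemma G_K (b : F) : inK b -> G b = [set t in T | tr t == b].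
Proof.
move=> bK; apply/setP => t; rewrite !inE.
set tb := t ^+ q.
have hN : t * tb = -1 -> h t = tr t.
  move=> N1; rewrite /h /tr -/tb.
  have -> : t ^+ 2 * tb = t * (t * tb) by ring.
  rewrite N1; apply: (@char3_eq _ _ t); ring.
apply/idP/idP.
  move=> /andP [tK /eqP ht].
  have hb : (h t) ^+ q = h t by rewrite ht; exact/eqP.
  have e : (t - tb) * (2 - t * tb) = 0.
    move: hb; rewrite /h barB barB barM bar_exp2 barK -/tb => hb.
    have -> : (t - tb) * (2 - t * tb) = (t - tb - t ^+ 2 * tb) - (tb - t - tb ^+ 2 * t) by ring.
    by rewrite -hb subrr.
  have N1 : t * tb = -1.
    move/eqP: e; rewrite mulf_eq0 subr_eq0 => /orP [/eqP e|].
      by move: tK; rewrite /inK -/tb e eqxx.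
    by rewrite two_m1 subr_eq0 eq_sym => /eqP.
  rewrite -exprS in N1; rewrite N1 eqxx tK /=.
  by rewrite -ht hN // /tb -exprS.
move=> /andP [/andP [/eqP N1 tK] /eqP tb_]; rewrite tK /=.
by rewrite hN ?tb_ // /tb -exprS.
Qed.

Definition Pb (b : F) : {poly F} :=
  'X^3 * ('X - (-1)%:P) ^+ 2 -
  (((- b)%:P * 'X + (b + b ^+ q)%:P) * ((- b ^+ q)%:P * 'X + (b + b ^+ q)%:P)).

Lemma size_lin (c d : F) : (size (c%:P * 'X + d%:P)%R <= 2)%N.
Proof.
apply: (leq_trans (size_polyD _ _)); rewrite geq_max; apply/andP; split.
  apply: (leq_trans (size_polyMleq _ _)); rewrite size_polyX.
  by move: (size_polyC_leq1 c); case: (size _) => [|[|]].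
by apply: (leq_trans (size_polyC_leq1 _)).
Qed.

Lemma size_Pb b : size (Pb b) = 6%N.
Proof.
have s1 : size ('X^3 * ('X - (-1)%:P) ^+ 2 : {poly F})%R = 6%N.
  rewrite size_Mmonic ?monic_exp ?monicXsubC // ?size_polyXn ?size_exp_XsubC //.
  by rewrite -size_poly_eq0 size_polyXn.
rewrite /Pb size_polyDl s1 // size_polyN.
apply: (leq_ltn_trans (size_polyMleq _ _)).
by have := size_lin (- b) (b + b ^+ q); have := size_lin (- b ^+ q) (b + b ^+ q);
   case: (size _) => [|[|[|]]] //; case: (size _) => [|[|[|]]].
Qed.

Lemma bar0 : (0 : F) ^+ q = 0.
Proof. by rewrite expr0n; have := q_ge3; case: (q). Qed.

Lemma G_root (b t : F) : ~~ inK b -> t \in G b ->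
  [/\ (t * t ^+ q) * ((t * t ^+ q) + 1) != 0,
      t * ((t * t ^+ q) * ((t * t ^+ q) + 1)) = (1 - t * t ^+ q) * b + b ^+ q
    & root (Pb b) (t * t ^+ q)].
Proof.
move=> bK; rewrite inE => /andP [tK /eqP ht].
have NK : (t * t ^+ q) ^+ q = t * t ^+ q by apply/eqP; apply: inK_norm.
have e1 : t * ((t * t ^+ q) * ((t * t ^+ q) + 1)) = (1 - t * t ^+ q) * b + b ^+ q.
  rewrite -ht /h barB barB barM bar_exp2 barK.
  set tb := t ^+ q.
  apply: (@char3_eq _ _ (t * tb * t)); ring.
set N := t * t ^+ q in NK e1 *.
have Ndef : N = t * t ^+ q by [].
clearbody N.
have e2 : t ^+ q * (N * (N + 1)) = (1 - N) * b ^+ q + b.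
  have := congr1 (fun z => z ^+ q) e1; rewrite /= !barM ?barD ?barB ?NK ?expr1n ?barK.
  by move=> E; rewrite E barM barB expr1n NK.
have N0 : N * (N + 1) != 0.
  rewrite mulf_eq0 negb_or; apply/andP; split.
    apply/negP => /eqP N0; move: tK; rewrite Ndef in N0.
    have t0 : t = 0.
      move/eqP: N0; rewrite mulf_eq0 => /orP [/eqP //| /eqP tq0].
      by rewrite -[t]barK tq0 bar0.
    by rewrite t0 /inK bar0 eqxx.
  apply/negP => /eqP N1.
  have NE : N = -1 by apply/eqP; rewrite -subr_eq0 opprK N1.
  move: e1; rewrite N1 !mulr0 NE opprK => e1.
  move: bK; rewrite /inK; apply/negP/negPn/eqP; apply: (@char3_eq _ _ (- b)).
  have -> : b ^+ q = - ((1 + 1) * b) by apply/eqP; rewrite -addr_eq0 addrC -e1.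
  ring.
split => //.
have E : N ^+ 3 * (N + 1) ^+ 2 = (t * (N * (N + 1))) * (t ^+ q * (N * (N + 1))).
  rewrite Ndef; set tb := t ^+ q; ring.
rewrite /Pb rootE !(hornerD, hornerN, hornerM, hornerC, hornerX, hornerXn, horner_exp); apply/eqP.
transitivity (N ^+ 3 * (N + 1) ^+ 2 - ((1 - N) * b + b ^+ q) * ((1 - N) * b ^+ q + b)).
  ring.
by rewrite -e1 -e2 -E subrr.
Qed.

Lemma card_G_notK (b : F) : ~~ inK b -> (#|G b| <= 5)%N.
Proof.
move=> bK.
have inj : {in G b &, injective (fun t => t * t ^+ q)}.
  move=> t1 t2 h1 h2 /= e.
  have [n1 e1 _] := G_root bK h1; have [_ e2 _] := G_root bK h2.
  rewrite e in n1 e1; apply: (mulIf n1); by rewrite e1 e2.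
rewrite -(card_in_imset inj).
have H := @card_roots (Pb b); rewrite size_Pb ltnS in H.
apply: leq_trans (H _); last by rewrite -size_poly_eq0 size_Pb.
apply: subset_leq_card; apply/subsetP => N /imsetP [t tG ->]; rewrite inE.
by have [_ _ ->] := G_root bK tG.
Qed.

Definition B2 := tr @: T.

Lemma card_G_K (b : F) : inK b -> #|G b| = if b \in B2 then 2%N else 0%N.
Proof.
move=> bK; rewrite G_K //; case: ifP.
  by move=> /imsetP [t tT ->]; rewrite T_fiber // cards2 T_neq.
move=> bB; apply/eqP; rewrite cards_eq0; apply/eqP; apply/setP => t; rewrite in_set0.
apply/negP => /setIdP [tT /eqP e]; move/negP: bB; apply; rewrite -e; exact: imset_f.
Qed.

Lemma B2_Kx : B2 \subset Kx.
Proof.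
apply/subsetP => c /imsetP [t tT ->]; rewrite inE /tr inKN ?inK_tr //= oppr_eq0.
apply/negP => /eqP e.
have tq : t ^+ q = - t by apply/eqP; rewrite -addr_eq0 addrC e.
have := T_norm tT; rewrite tq mulrN => /eqP; rewrite eqr_opp => /eqP t2.
have : (t - 1) * (t + 1) = 0.
  have -> : (t - 1) * (t + 1) = t * t - 1 by ring.
  by rewrite t2 subrr.
move/eqP; rewrite mulf_eq0 subr_eq0 addr_eq0 => /orP [] /eqP te; move: tT; rewrite inE.
  by rewrite te inK1 andbF.
by rewrite te (inKN inK1) andbF.
Qed.

Lemma entry_scale (a b : F) : a != 0 ->
  boomerang_entry fq a b = boomerang_entry fq 1 (b / a ^+ (q + 2)).
Proof.
move=> a0; rewrite /boomerang_entry.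
set A := a ^+ (q + 2).
have A0 : A != 0 by rewrite expf_neq0.
have fM : forall x, fq (a * x) = A * fq x by move=> x; rewrite /fq exprMn.
have fM1 : forall x, fq (a * x + a) = A * fq (x + 1).
  by move=> x; rewrite -{2}(mulr1 a) -mulrDr fM.
have aK : forall x, a * (x / a) = x by move=> x; rewrite mulrC divfK.
symmetry.
rewrite -(@card_imset _ _ (fun xy : F * F => (a * xy.1, a * xy.2))); last first.
  by move=> [x1 y1] [x2 y2] [] /(mulfI a0) -> /(mulfI a0) ->.
apply: eq_card => -[x y]; rewrite [in RHS]inE /=.
apply/idP/idP.
- move=> /imsetP [[x' y']]; rewrite inE /= => /andP [/eqP e1 /eqP e2] [-> ->].
  by rewrite !fM1 !fM -!mulrBr e1 e2 mulrC divfK ?eqxx.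
- move=> /andP [/eqP e1 /eqP e2]; apply/imsetP; exists (x / a, y / a); last by rewrite /= !aK.
  rewrite inE /=; apply/andP; split; apply/eqP; apply: (mulfI A0);
    rewrite [A * (b / A)]mulrC divfK // mulrBr.
    by rewrite -!fM !aK.
  by rewrite -!fM1 !aK.
Qed.

Lemma entry_le (b : F) : b != 0 -> (boomerang_entry fq 1%R b <= q + 2)%N.
Proof.
move=> b0; rewrite entry_char //; case bK: (inK b).
  by rewrite card_G_K //; case: ifP => _; rewrite ?addn0 ?leq_addr.
rewrite add0n; apply: leq_trans (card_G_notK _) _; first by rewrite bK.
by have := q_ge3; lia.
Qed.

Lemma B2_mem (b : F) : b \in B2 -> inK b /\ b != 0.
Proof. by move=> Hb; have := subsetP B2_Kx b Hb; rewrite inE => /andP []. Qed.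

Lemma entry_B2 (b : F) : b \in B2 -> boomerang_entry fq 1 b = (q + 2)%N.
Proof.
move=> Hb; have [bK b0] := B2_mem Hb.
by rewrite entry_char // bK card_G_K // Hb.
Qed.

Lemma card_B2 : (2 * #|B2| + #|I| = q.+1)%N.
Proof. by rewrite -card_T; exact: card_T_I. Qed.

Lemma card_I : #|I| = if odd m then 0%N else 2%N.
Proof.
case: ifP => om; first by rewrite I_odd // cards0.
by rewrite I_even // om.
Qed.

Lemma spec_q2 : (9 <= q)%N ->
  [set b : F | (b != 0) && (boomerang_entry fq 1 b == (q + 2)%N)] = B2.
Proof.
move=> q9; apply/setP => b; rewrite inE.
apply/idP/idP.
  move=> /andP [b0 /eqP]; rewrite entry_char //; case bK: (inK b).
    by rewrite card_G_K //; case: ifP => // _ e; exfalso; lia.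
  have := card_G_notK (negbT bK); rewrite add0n => h e; move: h; rewrite e; lia.
move=> Hb; have [_ b0] := B2_mem Hb; by rewrite b0 entry_B2 // eqxx.
Qed.

Lemma spec_q : (9 <= q)%N ->
  [set b : F | (b != 0) && (boomerang_entry fq 1 b == q)] = Kx :\: B2.
Proof.
move=> q9; apply/setP => b; rewrite [in RHS]inE [b \in Kx]inE inE.
apply/idP/idP.
  move=> /andP [b0 /eqP]; rewrite entry_char //; case bK: (inK b).
    by rewrite card_G_K //; case: ifP => bB e; [exfalso; lia | rewrite b0].
  have := card_G_notK (negbT bK); rewrite add0n => h e; move: h; rewrite e; lia.
move=> /andP [bB /andP [bK b0]]; rewrite b0 entry_char // bK card_G_K //.
by rewrite (negPf bB) addn0 eqxx.
Qed.

Lemma main_sec :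
  let q := (3 ^ m)%N in
  let f := fun x : F => (x ^+ (q + 2))%R in
  boomerang_uniformity f = (q + 2)%N /\
  ((9 <= q)%N ->
     boomerang_spectrum_count f (q + 2) =
       (if odd m then (q + 1) %/ 2 else (q - 1) %/ 2)%N /\
     boomerang_spectrum_count f q =
       (if odd m then (q - 3) %/ 2 else (q - 1) %/ 2)%N).
Proof.
move=> q' f.
have hB := card_B2; rewrite card_I in hB.
have q3 := q_ge3.
split.
  rewrite /boomerang_uniformity; apply/eqP; rewrite eqn_leq; apply/andP; split.
    apply/bigmax_leqP => -[a b] /= /andP [a0 b0].
    rewrite (entry_scale b a0); apply: entry_le.
    by rewrite mulf_neq0 // invr_neq0 // expf_neq0.
  have : B2 != set0.
    rewrite -card_gt0; move: hB; case: (odd m) => h; lia.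
  case/set0Pn => b Hb; have [_ b0] := B2_mem Hb.
  rewrite -(entry_B2 Hb).
  by apply: (@leq_bigmax_cond _ (fun ab : F * F => (ab.1 != 0) && (ab.2 != 0)) _ (1, b)); rewrite /= oner_eq0 b0.
move=> q9; split.
  rewrite /boomerang_spectrum_count spec_q2 //.
  move: hB; case: (odd m) => h.
    have -> : (q + 1 = #|B2| * 2)%N by lia.
    by rewrite mulnK.
  have -> : (q - 1 = #|B2| * 2)%N by lia.
  by rewrite mulnK.
rewrite /boomerang_spectrum_count spec_q // cardsD (setIidPr B2_Kx) card_Kx.
move: hB; case: (odd m) => h.
  have -> : (q - 3 = (#|B2| - 2) * 2)%N by lia.
  rewrite mulnK //. move: h q3; set k := #|B2|; clearbody k; move: (3 ^ m)%N => Q; lia.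
have -> : (q - 1 = #|B2| * 2)%N by lia.
by rewrite mulnK //; move: h q3; set k := #|B2|; clearbody k; move: (3 ^ m)%N => Q; lia.
Qed.

End Main.

Local Close Scope ring_scope.

Theorem theorem8 (F : finFieldType) (m : nat) (hm : (1 <= m)%N)
  (hcard : #|F| = (3 ^ m) ^ 2) :
  let q := (3 ^ m)%N in
  let f := fun x : F => (x ^+ (q + 2))%R in
  boomerang_uniformity f = (q + 2)%N /\
  ((9 <= q)%N ->
     boomerang_spectrum_count f (q + 2) =
       (if odd m then (q + 1) %/ 2 else (q - 1) %/ 2)%N /\
     boomerang_spectrum_count f q =
       (if odd m then (q - 3) %/ 2 else (q - 1) %/ 2)%N).
Proof. exact: main_sec. Qed.
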